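(* A homomorphism $f:N\to N'$ of finitely generated abelian groups is tame if and only if the augmentation map $\mathbb D(f)\to R\mathrm{Hom}([f],\mathbb Z)$ is an isomorphism in the derived category $D(\mathrm{Ab})$, if and only if $H^i(R\mathrm{Hom}([f],\mathbb Z))=0$ for all $i\neq 0$.
   Context: A homomorphism $f:N\to N'$ of finitely generated abelian groups is tame if $\operatorname{Cok}f$ is finite and $\operatorname{Ker}f$ is torsion-free (equivalently $f$ is injective on torsion subgroups). $[f]$ denotes the two-term cochain complex with $N$ in degree $0$, $N'$ in degree $1$, differential $f$, viewed in the derived category $D(\mathrm{Ab})$; $\mathbb D(f)=\mathrm{Hom}_{D(\mathrm{Ab})}([f],\mathbb Z)=H^0(R\mathrm{Hom}([f],\mathbb Z))$, and the augmentation map is the natural map from $H^0$ (placed in degree $0$) to the complex when the latter has cohomology only in degree $0$—more precisely the statement asserts that $R\mathrm{Hom}([f],\mathbb Z)$ is concentrated in degree $0$. *)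

(* Defs.v *)
From HB Require Import structures.
From mathcomp Require Import all_boot all_order all_algebra.
Set Implicit Arguments. Unset Strict Implicit. Unset Printing Implicit Defensive.
Import Order.TTheory GRing.Theory Num.Theory.
Local Open Scope ring_scope.

Definition fin_gen (N : zmodType) : Prop :=
  exists s : seq N, forall x : N,
    exists c : seq int, x = \sum_(i < size s) s`_i *~ c`_i.

Definition coker_finite (N N' : zmodType) (f : {additive N -> N'}) : Prop :=
  exists s : seq N', forall y : N', exists j : 'I_(size s), exists x : N,
    y = s`_j + f x.

Definition ker_torsion_free (N N' : zmodType) (f : {additive N -> N'}) : Prop :=
  forall x : N, f x = 0 -> forall n : nat, (0 < n)%N -> x *+ n = 0 -> x = 0.

Definition tame (N N' : zmodType) (f : {additive N -> N'}) : Prop :=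
  coker_finite f /\ ker_torsion_free f.

(* Q/Z-valued homomorphisms, represented by set-theoretic lifts to Q. *)
Definition is_int (q : rat) : Prop := exists z : int, q = z%:~R.

Definition QZhom (N : zmodType) (g : N -> rat) : Prop :=
  forall x y : N, is_int (g (x + y) - g x - g y).

Definition QZeq (N : zmodType) (g h : N -> rat) : Prop :=
  forall x : N, is_int (g x - h x).

(* RHom([f], Z) computed with the injective resolution 0 -> Z -> Q -> Q/Z -> 0:
   it is the total complex
     degree -1 : Hom(N', Q)
     degree  0 : Hom(N, Q) (+) Hom(N', Q/Z)
     degree  1 : Hom(N, Q/Z)
   with d(phi) = (phi o f, pi o phi) and d(a, b) = pi o a - b o f,
   and zero in all other degrees. *)

Definition RHom_H_m1_zero (N N' : zmodType) (f : {additive N -> N'}) : Prop :=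
  forall phi : {additive N' -> rat},
    (forall x : N, phi (f x) = 0) -> (forall y : N', is_int (phi y)) ->
    forall y : N', phi y = 0.

Definition RHom_H_1_zero (N N' : zmodType) (f : {additive N -> N'}) : Prop :=
  forall g : N -> rat, QZhom g ->
    exists a : {additive N -> rat}, exists b : N' -> rat,
      QZhom b /\ QZeq g (fun x => a x - b (f x)).

Definition RHom_H_zero (N N' : zmodType) (f : {additive N -> N'}) (i : int) : Prop :=
  if i == -1 then RHom_H_m1_zero f
  else if i == 1 then RHom_H_1_zero f
  else if i == 0 then False (* degree 0 is not characterized here; never used *)
  else True.

(* RHom([f], Z) is concentrated in degree 0, i.e. the augmentation
   D(f) -> RHom([f], Z) is an isomorphism. *)
Definition augmentation_iso (N N' : zmodType) (f : {additive N -> N'}) : Prop :=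
  RHom_H_m1_zero f /\ RHom_H_1_zero f.

(* Main.v *)
Require Import Defs.
From HB Require Import structures.
From mathcomp Require Import all_boot all_order all_algebra.
From mathcomp Require Import ring.
From Stdlib Require Import ClassicalEpsilon Classical.
Import Order.TTheory GRing.Theory Num.Theory.
Local Open Scope ring_scope.

Definition mkadd (U V : zmodType) (h : U -> V) (_ : zmod_morphism h) : U -> V := h.
HB.instance Definition _ U V h H := GRing.isZmodMorphism.Build U V (@mkadd U V h H) H.

Fixpoint lin {N : zmodType} (l : seq N) (c : nat -> int) : N :=
  if l is y :: l' then y *~ c 0%N + lin l' (fun i => c i.+1) else 0.

Section Lin.
Variable N : zmodType.
Implicit Types (l : seq N) (c : nat -> int).

Lemma lin_eq l c c' : (forall i, (i < size l)%N -> c i = c' i) -> lin l c = lin l c'.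
Proof.
elim: l c c' => [//|y l IH] c c' /= H.
by rewrite H // (IH (fun i => c i.+1) (fun i => c' i.+1)) // => i Hi; apply: H.
Qed.

Lemma linD l c c' : lin l (fun i => c i + c' i) = lin l c + lin l c'.
Proof.
elim: l c c' => [|y l IH] c c' /=; first by rewrite addr0.
rewrite (IH (fun i => c i.+1) (fun i => c' i.+1)) mulrzDr.
by rewrite addrACA.
Qed.

Lemma linN l c : lin l (fun i => - c i) = - lin l c.
Proof.
elim: l c => [|y l IH] c /=; first by rewrite oppr0.
by rewrite (IH (fun i => c i.+1)) mulrNz opprD.
Qed.

Lemma linB l c c' : lin l (fun i => c i - c' i) = lin l c - lin l c'.
Proof. by rewrite (linD l c (fun i => - c' i)) linN. Qed.

Lemma linM l c z : lin l (fun i => c i * z) = lin l c *~ z.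
Proof.
elim: l c => [|y l IH] c /=; first by rewrite mul0rz.
by rewrite (IH (fun i => c i.+1)) mulrzDl mulrzA.
Qed.

Lemma lin0 l : lin l (fun _ => 0) = 0.
Proof. by elim: l => [|y l IH] //=; rewrite IH mulr0z addr0. Qed.

Lemma lin_map (M : zmodType) (g : {additive N -> M}) l c : g (lin l c) = lin (map g l) c.
Proof.
elim: l c => [|y l IH] c /=; first by rewrite raddf0.
by rewrite raddfD raddfMz IH.
Qed.

Lemma lin_mapMn l c n : lin (map (fun u => u *+ n) l) c = lin l c *+ n.
Proof.
elim: l c => [|y l IH] c /=; first by rewrite mul0rn.
rewrite IH mulrnDl; congr (_ + _); by rewrite -mulrz_nat mulrzAC mulrz_nat.
Qed.

Lemma sum_lin (s : seq N) (c : seq int) :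
  \sum_(i < size s) s`_i *~ c`_i = lin s (fun i => c`_i).
Proof.
elim: s c => [|y s IH] c /=; first by rewrite big_ord0.
rewrite big_ord_recl /=; congr (_ + _).
case: c => [|k c] /=.
  by rewrite lin0 big1 // => i _; rewrite mulr0z.
by rewrite -IH; apply: eq_bigr => i _; rewrite add0n.
Qed.

Definition spn l (x : N) := exists c, x = lin l c.

End Lin.
Arguments spn {N}.

Set Implicit Arguments. Unset Strict Implicit.

Fixpoint allQ {T : Type} (Q : T -> Prop) (l : seq T) : Prop :=
  if l is y :: l' then Q y /\ allQ Q l' else True.

Lemma exists_min (Q : nat -> Prop) : (exists n, Q n) ->
  exists n, Q n /\ forall m, (m < n)%N -> ~ Q m.
Proof.
move=> [n Hn]; apply: NNPP => Hno; move: n Hn.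
elim/ltn_ind => n IH Hn; apply: Hno; exists n; by split.
Qed.

Lemma ideal_min (I : int -> Prop) : I 0 -> (forall a b, I a -> I b -> I (a - b)) ->
  forall d : nat, (0 < d)%N -> I d -> (forall n : nat, (0 < n)%N -> (n < d)%N -> ~ I n) ->
  forall k, I k -> exists q : int, k = q * d%:Z.
Proof.
move=> I0 Isub d d0 Id Imin k Ik.
have IN a : I a -> I (- a) by move=> Ia; rewrite -sub0r; apply: Isub.
have ID a b : I a -> I b -> I (a + b) by move=> Ia Ib; rewrite -[b]opprK; apply: Isub => //; apply: IN.
have Imul (q : int) : I (q * d%:Z).
  have Hn (n : nat) : I (n%:Z * d%:Z).
    elim: n => [|n IHn]; first by have ->: (0%N%:Z * d = 0) by apply: mul0r.
    by rewrite intS mulrDl mul1r; apply: ID.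
  case: q => n; first exact: Hn.
  by rewrite NegzE mulNr; apply: IN; apply: Hn.
exists (k %/ d)%Z.
have dz : (d%:Z != 0) by rewrite eqz_nat -lt0n.
have Hr : I (k %% d)%Z.
  have -> : (k %% d)%Z = k - (k %/ d)%Z * d by apply/eqP; rewrite eq_sym subr_eq addrC -divz_eq.
  exact: Isub.
have r0 := modz_ge0 k dz.
have rlt : (k %% d)%Z < d by apply: ltz_pmod; rewrite ltz_nat.
move: Hr r0 rlt; case E: (k %% d)%Z => [r|r] // Hr _ rlt.
case: r E Hr rlt => [|r] E Hr rlt.
  by rewrite {1}(divz_eq k d) E addr0.
by exfalso; apply: (Imin r.+1) => //; rewrite -ltz_nat.
Qed.

Section PH.
Variables (P : rat -> Prop) (P0 : P 0) (PD : forall a b, P a -> P b -> P (a + b))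
  (PN : forall a, P a -> P (- a)).

Lemma Peq a b : P a -> a = b -> P b.
Proof. by move=> H <-. Qed.
Lemma PB a b : P a -> P b -> P (a - b).
Proof. by move=> Ha Hb; apply: PD => //; apply: PN. Qed.
Lemma Pcomb a b e : P a -> P b -> e = a + b -> P e.
Proof. by move=> Ha Hb ->; apply: PD. Qed.

Variable N : zmodType.
Definition subgrp (D : N -> Prop) := D 0 /\ forall x y, D x -> D y -> D (x - y).

Section Sub.
Variables (D : N -> Prop) (HD : subgrp D).
Lemma subg0 : D 0. Proof. by case: HD. Qed.
Lemma subgB x y : D x -> D y -> D (x - y). Proof. by case: HD => _; apply. Qed.
Lemma subgN x : D x -> D (- x).
Proof. by move=> Dx; rewrite -sub0r; apply: subgB => //; apply: subg0. Qed.
Lemma subgD x y : D x -> D y -> D (x + y).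
Proof. by move=> Dx Dy; rewrite -[y]opprK; apply: subgB => //; apply: subgN. Qed.
Lemma subgMn x n : D x -> D (x *+ n).
Proof. move=> Dx; elim: n => [|n IH]; [exact: subg0|by rewrite mulrS; apply: subgD]. Qed.
Lemma subgMz x k : D x -> D (x *~ k).
Proof. by move=> Dx; case: k => n; [apply: subgMn|rewrite NegzE mulrNz; apply/subgN/subgMn]. Qed.
Lemma subg_lin l c : allQ D l -> D (lin l c).
Proof.
elim: l c => [|y l IH] c /=; first by move=> _; apply: subg0.
by case=> Dy Dl; apply: subgD; [apply: subgMz|apply: IH].
Qed.
End Sub.

Definition Phom (D : N -> Prop) (g : N -> rat) :=
  forall x y, D x -> D y -> P (g (x + y) - g x - g y).

Section PhomL.
Variables (D : N -> Prop) (HD : subgrp D) (g : N -> rat) (Hg : Phom D g).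

Lemma Phom0 : P (g 0).
Proof.
have := Hg (subg0 HD) (subg0 HD); rewrite addr0 => H.
by apply: (Peq (PN H)); ring.
Qed.

Lemma PhomN x : D x -> P (g (- x) + g x).
Proof.
move=> Dx; have := Hg (subgN HD Dx) Dx; rewrite addNr => H.
by apply: (Peq (PB Phom0 H)); ring.
Qed.

Lemma PhomZ x k : D x -> P (g (x *~ k) - g x *~ k).
Proof.
move=> Dx.
have Hn (n : nat) : P (g (x *+ n) - g x *+ n).
  elim: n => [|n IH]; first by rewrite !mulr0n subr0; apply: Phom0.
  have := Hg Dx (subgMn HD n Dx); rewrite -mulrS => H.
  by apply: (Pcomb H IH); rewrite mulrS; ring.
case: k => n; first exact: Hn.
rewrite NegzE !mulrNz -!pmulrn.
have := PhomN (subgMn HD n.+1 Dx) => H.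
by apply: (Pcomb H (PN (Hn n.+1))); ring.
Qed.

Lemma Phom_lin l c : allQ D l -> P (g (lin l c) - lin (map g l) c).
Proof.
elim: l c => [|y l IH] c /=; first by move=> _; rewrite subr0; apply: Phom0.
case=> Dy Dl.
have H1 := Hg (subgMz HD (c 0%N) Dy) (subg_lin HD (fun i => c i.+1) Dl).
have H2 := PhomZ (c 0%N) Dy.
have H3 := IH (fun i => c i.+1) Dl.
by apply: (Pcomb (PD H1 H2) H3); ring.
Qed.
End PhomL.

Lemma Phom_sub (D D' : N -> Prop) g : (forall x, D' x -> D x) -> Phom D g -> Phom D' g.
Proof. by move=> S H x y Dx Dy; apply: H; apply: S. Qed.

End PH.


Definition ext1 (N : zmodType) (D : N -> Prop) (y : N) (x : N) := exists k, D (x - y *~ k).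
Definition extl (N : zmodType) (D : N -> Prop) (l : seq N) (x : N) := exists c, D (x - lin l c).

Lemma zid1 (N : zmodType) (a b c d : N) : a - b - (c - d) = (a - c) - (b - d).
Proof. by rewrite !opprB !addrA (addrAC a (-b)) (addrAC a (-c) d) (addrAC (a+d)). Qed.

Section Step.
Variables (P : rat -> Prop) (P0 : P 0) (PD : forall a b, P a -> P b -> P (a + b))
  (PN : forall a, P a -> P (- a)).
Variable N : zmodType.

Lemma ext1_sub (D : N -> Prop) y : subgrp D -> subgrp (ext1 D y).
Proof.
move=> HD; split.
  by exists 0; rewrite mulr0z subr0; apply: subg0 HD.
move=> x1 x2 [k1 H1] [k2 H2]; exists (k1 - k2).
have -> : x1 - x2 - y *~ (k1 - k2) = (x1 - y *~ k1) - (x2 - y *~ k2).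
  by rewrite mulrzBr zid1.

move: (subgB HD H1 H2) => HH. exact HH.
Qed.

Lemma step (D : N -> Prop) (g : N -> rat) y t : subgrp D -> Phom P D g ->
  (forall m, D (y *~ m) -> P (g (y *~ m) - t *~ m)) ->
  exists G, Phom P (ext1 D y) G /\ (forall x, D x -> P (G x - g x)) /\ P (G y - t).
Proof.
move=> HD Hg compat.
pose kof x := epsilon (inhabits 0%Z) (fun k => D (x - y *~ k)).
pose G x := g (x - y *~ kof x) + t *~ kof x.
have key x k : D (x - y *~ k) -> P (G x - (g (x - y *~ k) + t *~ k)).
  move=> Da.
  have Hk' : D (x - y *~ kof x) := epsilon_spec (inhabits 0%Z) (fun k => D (x - y *~ k)) (ex_intro _ k Da).
  have Db : D (y *~ (k - kof x)).
    have -> : y *~ (k - kof x) = (x - y *~ kof x) - (x - y *~ k).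
      by rewrite mulrzBr zid1 subrr sub0r opprB.
    move: (subgB HD Hk' Da) => HH; exact HH.
  have E : (x - y *~ k) + y *~ (k - kof x) = x - y *~ kof x.
    by rewrite mulrzBr addrA subrK.
  have H1 := Hg _ _ Da Db; rewrite E in H1.
  have H2 := compat _ Db.
  apply: (Pcomb PD H1 H2); rewrite /G; ring.
exists G; split; [|split].
- move=> x1 x2 [k1 H1] [k2 H2].
  have E3 : x1 + x2 - y *~ (k1 + k2) = (x1 - y *~ k1) + (x2 - y *~ k2).
    by rewrite mulrzDr opprD addrACA.
  have H3 : D (x1 + x2 - y *~ (k1 + k2)).
    rewrite E3; move: (subgD HD H1 H2) => HH; exact HH.
  have K1 := key _ _ H1; have K2 := key _ _ H2; have K3 := key _ _ H3.
  have Hg12 := Hg _ _ H1 H2.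
  rewrite E3 in K3.
  apply: (Pcomb PD (PD K3 Hg12) (PN (PD K1 K2))); ring.
- move=> x Dx; have Dx' : D (x - y *~ 0%R) by rewrite mulr0z subr0.
  have := key _ _ Dx'; rewrite !mulr0z !subr0 ?addr0 //.
- have Dy : D (y - y *~ 1%R) by rewrite mulr1z subrr; apply: subg0 HD.
  have K := key _ _ Dy; rewrite !mulr1z subrr in K.
  have H0 := Phom0 PN HD Hg.
  by apply: (Pcomb PD K H0); ring.
Qed.
End Step.


Section Ext.
Variables (P : rat -> Prop) (P0 : P 0) (PD : forall a b, P a -> P b -> P (a + b))
  (PN : forall a, P a -> P (- a)).
Variable N : zmodType.

Lemma compat_ex (D : N -> Prop) (g : N -> rat) y : subgrp D -> Phom P D g ->
  exists t, forall m, D (y *~ m) -> P (g (y *~ m) - t *~ m).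
Proof.
move=> HD Hg.
case: (classic (exists n, D (y *+ n.+1))) => [Hex|Hno].
- have [n [Dn Hmin]] := exists_min Hex.
  exists (g (y *+ n.+1) / (n.+1)%:R); move=> m Dm.
  have [q ->] : exists q : int, m = q * (n.+1)%:Z.
    apply: (@ideal_min (fun m => D (y *~ m))) => //.
    + by rewrite mulr0z; apply: subg0 HD.
    + move=> a b Ha Hb; rewrite mulrzBr; move: (subgB HD Ha Hb) => HH; exact HH.
    + move=> k k0 kd; case: k k0 kd => [|k] // _ kd; exact: (Hmin k kd).
  have H := PhomZ PD PN HD Hg q Dn.
  rewrite mulrC mulrzA -pmulrn.
  apply: (Peq H); congr (_ - _); field.
  by rewrite addrC natr1 pnatr_eq0.
- exists 0; move=> m Dm.
  have m0 : m = 0.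
    case: m Dm => [[|k]|k] Dm //; exfalso; apply: Hno; exists k => //.
    by rewrite NegzE mulrNz in Dm; rewrite -[_ *+ _]opprK; move: (subgN HD Dm) => HH; exact HH.
  rewrite m0 !mulr0z subr0.
  exact: (Phom0 PN HD Hg).
Qed.

Lemma ext (D : N -> Prop) (g : N -> rat) l : subgrp D -> Phom P D g ->
  exists G, Phom P (extl D l) G /\ (forall x, D x -> P (G x - g x)).
Proof.
elim: l D g => [|y l IH] D g HD Hg.
  exists g; split; last by move=> x _; rewrite subrr.
  by apply: (Phom_sub _ Hg) => x [c]; rewrite /= subr0.
have [t Ht] := compat_ex y HD Hg.
have [G1 [HG1 [A1 _]]] := step PD PN HD Hg Ht.
have [G [HG A]] := IH _ _ (ext1_sub y HD) HG1.
exists G; split.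
  apply: (Phom_sub _ HG) => x [c Hc].
  exists (fun i => c i.+1); exists (c 0%N).
  have -> : x - lin l (fun i => c i.+1) - y *~ c 0%N = x - (y *~ c 0%N + lin l (fun i => c i.+1)).
    by rewrite opprD addrA addrAC.
  exact: Hc.
move=> x Dx.
have Dx' : ext1 D y x by exists 0; rewrite mulr0z subr0.
apply: (Pcomb PD (A _ Dx') (A1 _ Dx)); ring.
Qed.
End Ext.


Lemma zid2 (N : zmodType) (a b c d : N) : (a + b) + (c + d) = (b + c) + (a + d).
Proof. by rewrite [RHS]addrACA (addrC b a). Qed.

Lemma int0 : is_int 0. Proof. by exists 0. Qed.
Lemma intD a b : is_int a -> is_int b -> is_int (a + b).
Proof. by move=> [x ->] [y ->]; exists (x + y); rewrite intrD. Qed.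
Lemma intN a : is_int a -> is_int (- a).
Proof. by move=> [x ->]; exists (- x); rewrite intrN. Qed.
Lemma intMz a z : is_int a -> is_int (a * z%:~R).
Proof. by move=> [x ->]; exists (x * z); rewrite intrM. Qed.
Lemma intZ a z : is_int a -> is_int (a *~ z).
Proof. by move=> H; rewrite -mulrzr; apply: intMz. Qed.

Lemma zero0 : (fun q : rat => q = 0) 0. Proof. by []. Qed.
Lemma zeroD a b : (fun q : rat => q = 0) a -> (fun q : rat => q = 0) b -> (fun q : rat => q = 0) (a + b).
Proof. by move=> /= -> ->; rewrite addr0. Qed.
Lemma zeroN a : (fun q : rat => q = 0) a -> (fun q : rat => q = 0) (- a).
Proof. by move=> /= ->; rewrite oppr0. Qed.

Lemma fg_span (N : zmodType) : fin_gen N -> exists s : seq N, forall x, exists c, x = lin s c.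
Proof.
move=> [s Hs]; exists s => x; have [c ->] := Hs x.
by exists (fun i => c`_i); rewrite sum_lin.
Qed.

Lemma extl_all (N : zmodType) (D : N -> Prop) (s : seq N) :
  D 0 -> (forall x, exists c, x = lin s c) -> forall x, extl D s x.
Proof. by move=> D0 Hs x; have [c Hc] := Hs x; exists c; rewrite -Hc subrr. Qed.

Lemma Phom0_add (N : zmodType) (G : N -> rat) :
  Phom (fun q => q = 0) (fun _ => True) G -> zmod_morphism G.
Proof.
move=> H.
have HD : subgrp (fun _ : N => True) by [].
have G0 := Phom0 zeroN HD H.
have GN x : G (- x) = - G x.
  have := PhomN zeroD zeroN HD H (x:=x) I => /= E.
  by apply/eqP; rewrite -addr_eq0 E.
move=> x y; have := H x (- y) I I => /= E; rewrite GN in E.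
by apply/eqP; rewrite -subr_eq0; apply/eqP; rewrite -E; ring.
Qed.

Section PartA.
Variables (N N' : zmodType) (f : {additive N -> N'}).

Lemma A1 : coker_finite f -> RHom_H_m1_zero f.
Proof.
move=> [s Hs] phi Hf _ y.
have [j0 _] := Hs 0.
pose F (k : 'I_(size s).+1) := epsilon (inhabits j0) (fun j : 'I_(size s) => exists x, y *+ k = s`_j + f x).
have HF (k : 'I_(size s).+1) : exists x, y *+ k = s`_(F k) + f x.
  have [j Hj] := Hs (y *+ k).
  exact: (epsilon_spec (inhabits j0) (fun j : 'I_(size s) => exists x, y *+ k = s`_j + f x) (ex_intro _ j Hj)).
have [k1 [k2 [E ne]]] : exists k1 k2, F k1 = F k2 /\ k1 <> k2.
  apply: NNPP => Hno.
  have inj : injective F.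
    move=> a b Eab; apply: NNPP => ab; apply: Hno; by exists a, b.
  by have := leq_card F inj; rewrite !card_ord ltnn.
have [x1 E1] := HF k1; have [x2 E2] := HF k2.
have Ey : y *+ k1 - y *+ k2 = f (x1 - x2).
  by rewrite E1 E2 E raddfB opprD addrACA subrr add0r.
have : phi y *+ k1 = phi y *+ k2.
  by apply/eqP; rewrite -subr_eq0 -(raddfMn phi) -(raddfMn phi) -(raddfB phi) Ey Hf.
case: (eqVneq (phi y) 0) => // ny.
rewrite -(mulr_natr (phi y) k1) -(mulr_natr (phi y) k2) => /(mulfI ny) /eqP; rewrite eqr_nat => /eqP kk.
by exfalso; apply: ne; apply: val_inj.
Qed.

Lemma fin_reps (l : seq N') :
  allQ (fun y => exists n, exists x, y *+ n.+1 = f x) l ->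
  exists reps : seq N', forall c, exists j, (j < size reps)%N /\ exists x, lin l c = reps`_j + f x.
Proof.
elim: l => [|y l IH] /=.
  move=> _; exists [:: 0]; move=> c; exists 0%N; split => //; exists 0.
  by rewrite raddf0 addr0.
move=> [[n [x0 Ex0]] Hl]; have [reps' Hr] := IH Hl.
exists [seq y *+ r + z | r <- iota 0 n.+1, z <- reps']; move=> c.
have [j' [Hj' [x' Ex']]] := Hr (fun i => c i.+1).
have d0 : (n.+1)%:Z != 0 by [].
have r0 := modz_ge0 (c 0%N) d0.
have rlt : ((c 0%N) %% n.+1)%Z < n.+1 by apply: ltz_pmod.
move: r0 rlt; case Er: ((c 0%N) %% n.+1)%Z => [rn|rn] // _ rlt.
set e := y *+ rn + reps'`_j'.
have ein : e \in [seq y *+ r + z | r <- iota 0 n.+1, z <- reps'].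
  apply: (allpairs_f (fun r z => y *+ r + z)).
    by rewrite mem_iota add0n -ltz_nat.
  exact: mem_nth.
exists (index e [seq y *+ r + z | r <- iota 0 n.+1, z <- reps']); split.
  by rewrite index_mem.
rewrite nth_index //.
exists (x0 *~ ((c 0%N) %/ n.+1)%Z + x').
have Ec : y *~ c 0%N = f (x0 *~ ((c 0%N) %/ n.+1)%Z) + y *+ rn.
  rewrite {1}(divz_eq (c 0%N) n.+1) Er mulrzDr -mulrzA_C -pmulrn Ex0 raddfMz.
  by [].
by rewrite /= Ec Ex' raddfD /e zid2.
Qed.

Lemma A2 : fin_gen N' -> RHom_H_m1_zero f -> coker_finite f.
Proof.
move=> fg H.
have [s Hs] := fg_span fg.
case: (classic (forall y : N', exists n, exists x, y *+ n.+1 = f x)) => [Hall|Hno].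
  have Hl : allQ (fun y => exists n, exists x, y *+ n.+1 = f x) s.
    by elim: s {Hs} => [|y s IH] //=; split.
  have [reps Hr] := fin_reps Hl.
  exists reps => y; have [c Hc] := Hs y; have [j [Hj [x Ex]]] := Hr c.
  by exists (Ordinal Hj), x; rewrite Hc Ex.
exfalso.
have [y Hy] := not_all_ex_not _ _ Hno.
pose D (z : N') := exists x, z = f x.
have HD : subgrp D.
  split; first by exists 0; rewrite raddf0.
  by move=> _ _ [a ->] [b ->]; exists (a - b); rewrite raddfB.
have Hg : Phom (fun q => q = 0) D (fun _ => 0) by move=> *; rewrite /= !subr0.
have compat m : D (y *~ m) -> (fun q : rat => q = 0) ((fun _ => 0) (y *~ m) - 1 *~ m).
  move=> [x Ex]; suff -> : m = 0 by rewrite /= mulr0z subr0.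
  case: m Ex => [[|k]|k] Ex //; exfalso; apply: Hy; exists k.
    by exists x.
  by exists (- x); rewrite raddfN -Ex NegzE mulrNz opprK.
have [G1 [HG1 [A1' Ay]]] := step zeroD zeroN HD Hg compat.
have [G [HG A]] := ext zero0 zeroD zeroN s (ext1_sub y HD) HG1.
have HGall : Phom (fun q => q = 0) (fun _ => True) G.
  apply: (Phom_sub _ HG) => x _; apply: extl_all => //.
  by exists 0; rewrite mulr0z subr0; apply: subg0 HD.
have Gadd := Phom0_add HGall.
have Gf x : G (f x) = 0.
  have D1 : ext1 D y (f x) by exists 0; rewrite mulr0z subr0; exists x.
  have E1 := A1' (f x) (ex_intro _ x erefl); have E2 := A _ D1; simpl in E1, E2.
  by rewrite subr0 in E1; rewrite E1 subr0 in E2.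
have Gy : G y = 1.
  have D1 : ext1 D y y by exists 1; rewrite mulr1z subrr; exists 0; rewrite raddf0.
  have := A _ D1 => /= E2; apply/eqP; rewrite -subr_eq0 -Ay; apply/eqP.
  by move/eqP: E2; rewrite subr_eq0 => /eqP ->.
have [den [den0 Hden]] : exists den : int, den != 0 /\
    allQ (fun q => is_int (den%:~R * q)) (map G s).
  elim: (map G s) => [|q l [d [d0 Hd]]] /=; first by exists 1.
  exists (d * denq q); split; first by rewrite mulf_neq0 // denq_neq0.
  split.
    by exists (d * numq q); rewrite !intrM numqE; ring.
  elim: l Hd {d0} => [|q' l IH] //= [Hq' Hl]; split; last exact: IH.
  by rewrite intrM mulrAC; apply: intMz.
pose phi0 (z : N') := den%:~R * G z.
have phiadd : zmod_morphism phi0 by move=> a b; rewrite /phi0 Gadd mulrBr.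
pose phi : {additive N' -> rat} := @mkadd N' rat phi0 phiadd.
have Hphi : forall z, phi z = 0.
  apply: H.
    by move=> x; rewrite /= /mkadd /phi0 Gf mulr0.
  move=> z; have [c ->] := Hs z; rewrite /= /mkadd /phi0.
  have := Phom_lin zeroD zeroN (D:=fun _ : N' => True) (conj I (fun _ _ _ _ => I)) HGall c (l:=s).
  have Hall : allQ (fun _ : N' => True) s by elim: (s) => //.
  move/(_ Hall) => /= /eqP; rewrite subr_eq0 => /eqP ->.
  elim: (map G s) Hden c => [|q l IH] /= => [_ c|[Hq Hl] c]; first by rewrite mulr0; exact: int0.
  rewrite mulrDr; apply: intD; last exact: IH.
  by rewrite mulrzAr; apply: intZ.
have := Hphi y; rewrite /= /mkadd /phi0 Gy mulr1 => /eqP.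
by rewrite intr_eq0 (negPf den0).
Qed.
End PartA.


Definition cons_c (k : int) (c : nat -> int) : nat -> int :=
  fun i => if i is j.+1 then c j else k.

Section Free.
Variable N : zmodType.
Implicit Types (l : seq N).

Lemma lin_cons y l k c : lin (y :: l) (cons_c k c) = y *~ k + lin l c.
Proof. by []. Qed.

Lemma spn0 l : spn l 0. Proof. by exists (fun _ => 0); rewrite lin0. Qed.
Lemma spnD l x y : spn l x -> spn l y -> spn l (x + y).
Proof. by move=> [c ->] [d ->]; exists (fun i => c i + d i); rewrite linD. Qed.
Lemma spnN l x : spn l x -> spn l (- x).
Proof. by move=> [c ->]; exists (fun i => - c i); rewrite linN. Qed.
Lemma spnMz l x k : spn l x -> spn l (x *~ k).
Proof. by move=> [c ->]; exists (fun i => c i * k); rewrite linM. Qed.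
Lemma spn_subgrp l : subgrp (spn l).
Proof. by split; [apply: spn0|move=> x y Hx Hy; apply: spnD => //; apply: spnN]. Qed.

Lemma spn_cons y l x : spn (y :: l) x <-> exists k c, x = y *~ k + lin l c.
Proof.
split; first by move=> [c ->]; exists (c 0%N), (fun i => c i.+1).
by move=> [k [c ->]]; exists (cons_c k c).
Qed.

Definition indep l := forall c, lin l c = 0 -> forall i, (i < size l)%N -> c i = 0.

Lemma indep_cons y l : indep (y :: l) -> forall k c, y *~ k + lin l c = 0 ->
  k = 0 /\ forall i, (i < size l)%N -> c i = 0.
Proof.
move=> H k c E; have := H (cons_c k c) E => H'.
by split; [apply: (H' 0%N)|move=> i Hi; apply: (H' i.+1)].
Qed.

Lemma indep_uniq l c d : indep l -> lin l c = lin l d -> forall i, (i < size l)%N -> c i = d i.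
Proof.
move=> H E i Hi; apply/eqP; rewrite -subr_eq0; apply/eqP.
by apply: (H (fun i => c i - d i)) => //; rewrite linB E subrr.
Qed.

Lemma claim3 l : exists B, indep B /\ exists M, (0 < M)%N /\ forall c, spn B (lin l c *+ M).
Proof.
elim: l => [|y l [B' [HB' [M' [M'0 HM']]]]].
  exists [::]; split; first by move=> c _ i.
  by exists 1%N; split => // c; exists (fun _ => 0).
case: (classic (indep (y :: B'))) => Hi.
  exists (y :: B'); split => //; exists M'; split => // c.
  have [d Ed] := HM' (fun i => c i.+1).
  apply/spn_cons; exists (c 0%N * M'), d.
  by rewrite /= mulrnDl Ed mulrzA.
have [K [K0 HK]] : exists K, (0 < K)%N /\ spn B' (y *+ K).
  have [c [Hc [i [Hi' ci]]]] : exists c, lin (y :: B') c = 0 /\ exists i, (i < size (y :: B'))%N /\ c i <> 0.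
    apply: NNPP => Hno; apply: Hi => c Hc i Hi'; apply: NNPP => ci; apply: Hno.
    by exists c; split => //; exists i.
  have Hy : spn B' (y *~ c 0%N).
    exists (fun i => - c i.+1); rewrite linN; apply/eqP; rewrite -addr_eq0; apply/eqP.
    exact: Hc.
  have c00 : c 0%N <> 0.
    move=> c00; apply: ci; case: i Hi' => [|j] Hj //.
    apply: (HB' (fun i => c i.+1)) => //.
    by move: Hc; rewrite /= c00 mulr0z add0r.
  case E0: (c 0%N) c00 Hy => [[|n]|n] // _ Hy.
    by exists n.+1.
  exists n.+1; split => //.
  by rewrite NegzE mulrNz in Hy; rewrite -[_ *+ _]opprK; apply: spnN.
exists B'; split => //; exists (M' * K)%N; split; first by rewrite muln_gt0 M'0.
move=> c.
have -> : lin (y :: l) c *+ (M' * K) = (y *+ K) *~ (c 0%N * M') + (lin l (fun i => c i.+1) *+ M') *+ K.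
  rewrite /= mulrnDl; congr (_ + _); last by rewrite mulrnA.
  rewrite !pmulrn -!mulrzA; congr (y *~ _); ring.
apply: spnD; first exact: spnMz.
by rewrite pmulrn; apply: spnMz.
Qed.

Lemma spn_lin l E c : allQ (spn l) E -> spn l (lin E c).
Proof. move=> H; exact: (subg_lin (spn_subgrp l) c H). Qed.

Lemma allQ_impl (T : Type) (Q R : T -> Prop) (s : seq T) : (forall x, Q x -> R x) -> allQ Q s -> allQ R s.
Proof. by move=> S; elim: s => [|y s IH] //= [Qy Ql]; split; [apply: S|apply: IH]. Qed.

Lemma subfree B : indep B -> forall H : N -> Prop, subgrp H -> (forall x, H x -> spn B x) ->
  exists E, indep E /\ allQ H E /\ forall x, H x -> spn E x.
Proof.
elim: B => [|b B' IH] HB H HH HS.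
  exists [::]; split; first by move=> c _ i.
  split => // x Hx; have [c ->] := HS x Hx; by exists c.
pose I (k : int) := exists h, H h /\ exists c, h = b *~ k + lin B' c.
have I0 : I 0 by exists 0; split; [apply: subg0 HH|exists (fun _ => 0); rewrite mulr0z lin0 addr0].
have Isub a a' : I a -> I a' -> I (a - a').
  move=> [h [Hh [c Eh]]] [h' [Hh' [c' Eh']]].
  exists (h - h'); split.
    by move: (subgB HH Hh Hh') => HHH; exact HHH.
  by exists (fun i => c i - c' i); rewrite Eh Eh' mulrzBr linB opprD addrACA.
have HsB x : H x -> exists k c, x = b *~ k + lin B' c /\ I k.
  move=> Hx; have /spn_cons [k [c Ec]] := HS x Hx.
  by exists k, c; split => //; exists x; split => //; exists c.
case: (classic (exists n, I (n.+1)%:Z)) => [Hex|Hno].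
  have [n [[h0 [Hh0 [c0 Eh0]]] Hmin]] := exists_min Hex.
  pose H' x := H x /\ spn B' x.
  have HH' : subgrp H'.
    split; first by split; [apply: subg0 HH|apply: spn0].
    move=> x y [Hx Sx] [Hy Sy]; split; last by apply: spnD => //; apply: spnN.
    by move: (subgB HH Hx Hy) => HHH; exact HHH.
  have HB' : indep B' by move=> c Hc i Hi; have := HB (cons_c 0 c); rewrite lin_cons mulr0z add0r => /(_ Hc i.+1); apply.
  have [E' [HE' [AE' SE']]] := IH HB' H' HH' (fun x Hx => Hx.2).
  exists (h0 :: E'); split; [|split].
  - move=> c Hc.
    have Hs : spn B' (lin E' (fun i => c i.+1)).
      by apply: spn_lin; apply: allQ_impl AE' => x [].
    have [e Ee] := Hs.
    have Hk : b *~ (c 0%N * n.+1) + lin B' (fun i => c0 i * c 0%N + e i) = 0.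
      move: Hc; rewrite /= Eh0 Ee linD linM mulrzDl -mulrzA.
      by rewrite [c 0%N * _]mulrC addrA.
    have [k0 _] := indep_cons HB Hk.
    have ck : c 0%N = 0.
      by move/eqP: k0; rewrite mulf_eq0 orbF => /eqP.
    have Hl : lin E' (fun i => c i.+1) = 0 by move: Hc; rewrite /= ck mulr0z add0r.
    by case=> [|i] Hi //; apply: (HE' _ Hl).
  - by split => //; apply: allQ_impl AE' => x [].
  - move=> x Hx; have [k [c [Ex Ik]]] := HsB x Hx.
    have Imin : forall m : nat, (0 < m)%N -> (m < n.+1)%N -> ~ I m.
      by move=> [|m] // _ mn; exact: Hmin m mn.
    have [q Eq] := ideal_min I0 Isub (ltn0Sn n) (ex_intro _ h0 (conj Hh0 (ex_intro _ c0 Eh0))) Imin Ik.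
    have Hr : H' (x - h0 *~ q).
      split; first by move: (subgB HH Hx (subgMz HH q Hh0)) => HHH; exact HHH.
      exists (fun i => c i - c0 i * q).
      rewrite Ex Eh0 Eq linB linM mulrzDl -mulrzA opprD addrACA.
      by rewrite [q * _]mulrC subrr add0r.
    have [e Ee] := SE' _ Hr.
    exists (cons_c q e); rewrite lin_cons -Ee addrC subrK //.
have HB' : indep B' by move=> c Hc i Hi; have := HB (cons_c 0 c); rewrite lin_cons mulr0z add0r => /(_ Hc i.+1); apply.
apply: (IH HB' H HH) => x Hx; have [k [c [Ex Ik]]] := HsB x Hx.
suff k0 : k = 0 by exists c; rewrite Ex k0 mulr0z add0r.
case: k Ik {Ex} => [[|n]|n] Ik //; exfalso; apply: Hno; exists n => //.
by move: (Isub _ _ I0 Ik); rewrite sub0r NegzE opprK.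
Qed.
End Free.


Lemma not_int_inv (d : nat) : (1 < d)%N -> ~ is_int ((d%:R : rat)^-1).
Proof.
move=> d1 [z Hz].
have h0 : (0 : rat) < (d%:R : rat)^-1 by rewrite invr_gt0 ltr0n; apply: ltn_trans d1.
have h1 : (d%:R : rat)^-1 < 1 by rewrite invf_lt1 ?ltr1n // ltr0n; apply: ltn_trans d1.
rewrite Hz ltr0z in h0; rewrite Hz ltrz1 in h1.
by case: z {Hz} h0 h1 => [[|k]|k].
Qed.

Section PartB.
Variables (N N' : zmodType) (f : {additive N -> N'}).

Lemma B2 : fin_gen N -> RHom_H_1_zero f -> ker_torsion_free f.
Proof.
move=> fg H x0 fx0 n n0 Hn; apply: NNPP => nz.
have [s Hs] := fg_span fg.
have [m [Hm Hmin]] : exists m, x0 *+ m.+1 = 0 /\ forall k, (k < m)%N -> ~ x0 *+ k.+1 = 0.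
  apply: exists_min; exists n.-1; by rewrite prednK.
have d1 : (1 < m.+1)%N.
  by case: m Hm {Hmin} => [|m] // Hm; exfalso; apply: nz; rewrite -Hm.
pose D := fun x : N => x = 0.
have HD : subgrp D by split => // x y -> ->; rewrite subrr.
have Hg : Phom is_int D (fun _ => 0) by move=> *; rewrite !subr0; exact: int0.
have compat : forall k, D (x0 *~ k) -> is_int ((fun _ => 0) (x0 *~ k) - ((m.+1)%:R)^-1 *~ k).
  move=> k Dk.
  have [q ->] : exists q : int, k = q * (m.+1)%:Z.
    apply: (@ideal_min (fun k => x0 *~ k = 0)) => //.
    + by move=> a b Ha Hb; rewrite mulrzBr Ha Hb subrr.
    + by move=> [|k'] // _ kd; apply: Hmin kd.
  exists (- q); rewrite /= sub0r -mulrzr intrM; field.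
  by rewrite addrC natr1 pnatr_eq0.
have [G1 [HG1 [A1 Ay]]] := step intD intN HD Hg compat.
have [G [HG A]] := ext int0 intD intN s (ext1_sub x0 HD) HG1.
have HGall : Phom is_int (fun _ => True) G.
  apply: (Phom_sub _ HG) => x _; apply: extl_all => //.
  by exists 0; rewrite mulr0z subr0.
have [a [b [Hb HQ]]] := H G (fun x y => HGall x y I I).
have ax : a x0 = 0.
  have := raddfMn a n x0; rewrite Hn raddf0 => /esym /eqP.
  by rewrite mulrn_eq0 => /orP [/eqP n00|/eqP //]; move: n0; rewrite n00.
have b0 : is_int (b 0).
  by have := intN (Hb 0 0); rewrite addr0; congr is_int; ring.
have Gx : is_int (G x0).
  have := HQ x0; rewrite /= fx0 ax => I1.
  by apply: (Pcomb intD I1 (intN b0)); ring.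
have Ex : is_int (G x0 - G1 x0).
  by apply: A; exists 1; rewrite mulr1z subrr.
apply: (not_int_inv d1).
have := Pcomb intD (PB intD intN Gx Ex) (intN Ay); apply; ring.
Qed.

Lemma B1 : fin_gen N -> fin_gen N' -> ker_torsion_free f -> RHom_H_1_zero f.
Proof.
move=> fg fg' Htf g Hg.
have [s Hs] := fg_span fg; have [s' Hs'] := fg_span fg'.
pose K (x : N) := f x = 0.
have HK : subgrp K by split; [exact: raddf0|move=> x y; rewrite /K raddfB => -> ->; rewrite subrr].
have [B [HB [M [M0 HM]]]] := claim3 s.
pose H (z : N) := exists x, K x /\ z = x *+ M.
have HH : subgrp H.
  split; first by exists 0; split; [exact: raddf0|rewrite mul0rn].
  move=> _ _ [x [Kx ->]] [y [Ky ->]]; exists (x - y); split; last by rewrite mulrnBl.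
  by move: (subgB HK Kx Ky) => HHH; exact HHH.
have HSB : forall z, H z -> spn B z.
  by move=> _ [x [_ ->]]; have [c ->] := Hs x; exact: HM.
have [E [HE [AE SE]]] := subfree HB HH HSB.
have [U [AU EU]] : exists U, allQ K U /\ E = map (fun u => u *+ M) U.
  elim: E {HE SE} AE => [|e E IH] /=; first by exists [::].
  move=> [[u [Ku ->]] AE]; have [U [AU ->]] := IH AE; by exists (u :: U).
pose cf (x : N) := epsilon (inhabits (fun _ : nat => 0%R : int)) (fun c => x *+ M = lin E c).
have Hcf x : K x -> x *+ M = lin E (cf x).
  move=> Kx; have [c Hc] := SE (x *+ M) (ex_intro _ x (conj Kx erefl)).
  exact: (epsilon_spec (inhabits (fun _ : nat => 0%R : int)) (fun c => x *+ M = lin E c) (ex_intro _ c Hc)).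
pose a0 (x : N) := lin (map g U) (cf x).
have sizeU : size (map g U) = size E by rewrite EU !size_map.
have HgAll : Phom is_int (fun _ => True) g by move=> x y _ _; exact: Hg.
have Ha0 : Phom (fun q => q = 0) K a0.
  move=> x y Kx Ky /=.
  have Kxy : K (x + y) by move: (subgD HK Kx Ky) => HHH; exact HHH.
  have E1 : lin E (cf (x + y)) = lin E (fun i => cf x i + cf y i).
    by rewrite linD -!Hcf // mulrnDl.
  have Heq := indep_uniq HE E1.
  rewrite /a0 (@lin_eq _ (map g U) (cf (x + y)) (fun i => cf x i + cf y i)); last first.
    by move=> i; rewrite sizeU; apply: Heq.
  rewrite linD; ring.
have a0g : forall x, K x -> is_int (g x - a0 x).
  move=> x Kx.
  have Ex : (x - lin U (cf x)) *+ M = 0.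
    by rewrite mulrnBl Hcf // EU lin_mapMn subrr.
  have KU : K (x - lin U (cf x)).
    by move: (subgB HK Kx (subg_lin HK (cf x) AU)) => HHH; exact HHH.
  have := Htf _ KU M M0 Ex => /eqP; rewrite subr_eq0 => /eqP Ex'.
  rewrite {1}Ex'.
  have AT : allQ (fun _ : N => True) U by elim: (U).
  exact: (Phom_lin intD intN (D:=fun _ : N => True) (conj I (fun _ _ _ _ => I)) HgAll (cf x) AT).
have [A [HA AgA]] := ext zero0 zeroD zeroN s HK Ha0.
have HAall : Phom (fun q => q = 0) (fun _ => True) A.
  by apply: (Phom_sub _ HA) => x _; apply: extl_all => //; exact: raddf0.
have Aadd := Phom0_add HAall.
pose Aad : {additive N -> rat} := @mkadd N rat A Aadd.
have AD x y : A (x + y) = A x + A y by have := raddfD Aad x y.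
pose xof (y : N') := epsilon (inhabits (0 : N)) (fun x => y = f x).
pose b0 (y : N') := A (xof y) - g (xof y).
have key y x : y = f x -> is_int (b0 y - (A x - g x)).
  move=> Ey.
  have Hx' : y = f (xof y) := epsilon_spec (inhabits (0 : N)) (fun x => y = f x) (ex_intro _ x Ey).
  rewrite /b0; move: Hx'; set x' := xof y => Hx'.
  have Kk : K (x' - x) by rewrite /K raddfB -Hx' -Ey subrr.
  have I1 := a0g _ Kk.
  have I2 := AgA _ Kk; move/eqP: I2; rewrite subr_eq0 => /eqP I2.
  have I3 := Hg (x' - x) x; rewrite subrK in I3.
  have Ak : A x' = A (x' - x) + A x by rewrite -AD subrK.
  rewrite Ak I2.
  by apply: (Pcomb intD (intN I1) (intN I3)); ring.
pose D' (y : N') := exists x, y = f x.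
have HD' : subgrp D'.
  split; first by exists 0; rewrite raddf0.
  by move=> _ _ [a ->] [b ->]; exists (a - b); rewrite raddfB.
have Hb0 : Phom is_int D' b0.
  move=> _ _ [x1 ->] [x2 ->].
  have K1 := key _ x1 erefl; have K2 := key _ x2 erefl.
  have K3 := key (f x1 + f x2) (x1 + x2) (esym (raddfD f x1 x2)).
  have Hg12 := Hg x1 x2.
  rewrite AD in K3.
  apply: (Pcomb intD (PB intD intN K3 (intD K1 K2)) (intN Hg12)); ring.
have [b [Hb Ab]] := ext int0 intD intN s' HD' Hb0.
exists Aad, b; split.
  move=> y1 y2; apply: Hb; apply: extl_all => //; by exists 0; rewrite raddf0.
move=> x; rewrite /= /mkadd.
have I1 := Ab (f x) (ex_intro _ x erefl); have I2 := key (f x) x erefl.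
by apply: (Pcomb intD I1 I2); ring.
Qed.
End PartB.

Unset Implicit Arguments. Set Strict Implicit.

Theorem proposition3p9p9 (N N' : zmodType) (f : {additive N -> N'}) :
  fin_gen N -> fin_gen N' ->
  (tame f <-> augmentation_iso f) /\
  (augmentation_iso f <-> (forall i : int, i != 0 -> RHom_H_zero f i)).
Proof.
move=> fg fg'; split; split.
- by move=> [cf tf]; split; [apply: A1|apply: B1].
- by move=> [h1 h2]; split; [apply: A2|apply: B2].
- move=> [h1 h2] i i0; rewrite /RHom_H_zero.
  case: ifP => _ //; case: ifP => _ //.
  by case: ifP => // /eqP i00; move: i0; rewrite i00.
- move=> H; split.
  + by have := H (-1) isT; rewrite /RHom_H_zero eqxx.
  + by have := H 1 isT; rewrite /RHom_H_zero.
Qed.
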